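(* $NQC(HAM_n^{n/2})=O(\log n)$.
   Context: For even $n$ and $x,y\in\{0,1\}^n$, $HAM^t_n(x,y)=1$ iff $\sum_{i=1}^n(x_i\oplus y_i)\neq t$. Quantum communication model (Yao, no prior entanglement): Alice receives $x$, Bob $y$; each holds private qubits initialized to the input and $|0\rangle$; in each round one player applies a unitary to his qubits and sends one qubit; at the end a qubit is measured giving the output; the cost is the number of qubits exchanged. A nondeterministic quantum protocol for a Boolean $f$ rejects every input in $f^{-1}(0)$ with certainty and accepts every other input with positive probability; $NQC(f)$ is the minimum cost of such a protocol. *)

(* Defs.v *)
From mathcomp Require Import all_boot all_algebra.
From mathcomp Require Import complex Rstruct.
Set Implicit Arguments. Unset Strict Implicit. Unset Printing Implicit Defensive.
Import GRing.Theory Num.Theory.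
Local Open Scope ring_scope.

Definition CC := (Rdefinitions.R)[i].

Definition hamdist (n : nat) (x y : 'I_n -> bool) : nat :=
  (\sum_(i < n) (x i (+) y i : nat))%N.
Definition HAM (n t : nat) (x y : 'I_n -> bool) : bool := hamdist x y != t.

Definition basis (m : nat) := {ffun 'I_m -> bool}.
(** Operators and states on (C^2)^{⊗m}, as matrices/vectors indexed by basis. *)
Definition op (m : nat) := basis m -> basis m -> CC.
Definition qstate (m : nat) := basis m -> CC.

Definition apply_op m (U : op m) (psi : qstate m) : qstate m :=
  fun i => \sum_(j : basis m) U i j * psi j.

Definition unitary m (U : op m) : Prop :=
  forall i j : basis m, \sum_(k : basis m) U i k * (U j k)^* = (i == j)%:R.

Definition agree_off m (S : pred 'I_m) (i j : basis m) : bool :=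
  [forall k, (k \notin S) ==> (i k == j k)].
Definition agree_on m (S : pred 'I_m) (i j : basis m) : bool :=
  [forall k, (k \in S) ==> (i k == j k)].

(** U acts only on the qubits in S, i.e. U = u_S ⊗ Id_{complement of S}. *)
Definition local_op m (S : pred 'I_m) (U : op m) : Prop :=
  (forall i j, ~~ agree_off S i j -> U i j = 0) /\
  (forall i j i' j', agree_off S i j -> agree_off S i' j' ->
      agree_on S i i' -> agree_on S j j' -> U i j = U i' j').

(** A quantum communication protocol (Yao model, no entanglement) on inputs
    x, y in {0,1}^n.  The whole system consists of qm qubits; owner qubits
    (true = Alice, false = Bob).  Alice's input is loaded into the qubits
    xpos i, Bob's into the qubits ypos j, all other qubits start in |0>.
    Round t < rounds: player speaker t applies the unitary U t acting only on
    the qubits he currently owns, then sends his qubit sent t to the other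
    player.  At the end qubit out is measured; outcome 1 = accept. *)
Arguments op : clear implicits.
Record qprotocol (n : nat) := QProtocol {
  qm : nat;
  rounds : nat;
  own0 : 'I_qm -> bool;
  xpos : 'I_n -> 'I_qm;
  ypos : 'I_n -> 'I_qm;
  speaker : nat -> bool;
  sent : nat -> 'I_qm;
  U : nat -> op qm;
  out : 'I_qm }.
Arguments qm {n}. Arguments rounds {n}. Arguments own0 {n} _ _. Arguments xpos {n} _ _.
Arguments ypos {n} _ _. Arguments speaker {n} _ _. Arguments sent {n} _ _.
Arguments U {n} _ _ _ _. Arguments out {n}.

Section Protocol.
Variables (n : nat) (P : qprotocol n).

Fixpoint owner (t : nat) : 'I_(qm P) -> bool :=
  match t with
  | 0 => own0 P
  | t'.+1 => fun k => if k == sent P t' then ~~ owner t' k else owner t' k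
  end.

Definition valid_protocol : Prop :=
  [/\ injective (xpos P), injective (ypos P),
      (forall i, own0 P (xpos P i) = true),
      (forall j, own0 P (ypos P j) = false) &
      (forall t, (t < rounds P)%N ->
         [/\ owner t (sent P t) = speaker P t,
             unitary (U P t) &
             local_op [pred k | owner t k == speaker P t] (U P t)])].

Definition init_basis (x y : 'I_n -> bool) : basis (qm P) :=
  [ffun k => [exists i, (xpos P i == k) && x i] ||
             [exists j, (ypos P j == k) && y j]].

Fixpoint run (x y : 'I_n -> bool) (t : nat) : qstate (qm P) :=
  match t with
  | 0 => fun b => (b == init_basis x y)%:R
  | t'.+1 => apply_op (U P t') (run x y t')
  end.

Definition accept_prob (x y : 'I_n -> bool) : CC :=
  \sum_(b : basis (qm P) | b (out P)) `|run x y (rounds P) b| ^+ 2.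

(** cost = number of qubits exchanged = number of rounds *)
Definition cost : nat := rounds P.

Definition nondet_computes (f : ('I_n -> bool) -> ('I_n -> bool) -> bool) : Prop :=
  valid_protocol /\
  forall x y, (f x y = false -> accept_prob x y = 0) /\
              (f x y = true -> 0 < accept_prob x y).
End Protocol.

Definition NQC_le (n : nat) (f : ('I_n -> bool) -> ('I_n -> bool) -> bool) (c : nat) : Prop :=
  exists P : qprotocol n, nondet_computes P f /\ (cost P <= c)%N.

(* Main.v *)
Require Import Defs.
From mathcomp Require Import all_boot all_algebra complex Rstruct ring zify.
Set Implicit Arguments. Unset Strict Implicit. Unset Printing Implicit Defensive.
Import GRing.Theory Num.Theory.
Local Open Scope ring_scope.

Definition sgn (b : bool) : CC := if b then -1 else 1.

Lemma sgn_conj b : (sgn b)^* = sgn b.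
Proof. by case: b; rewrite /sgn ?rmorphN1 ?rmorph1. Qed.
Lemma sgnK b : sgn b * sgn b = 1.
Proof. by case: b; rewrite /sgn ?mulrNN mulr1. Qed.
Lemma sgnM a b : sgn a * sgn b = sgn (a (+) b).
Proof. by case: a; case: b; rewrite /sgn ?mulrNN ?mulr1 ?mul1r ?mulrN1. Qed.
Lemma sgn_nat b : sgn b = 1 - (b : nat)%:R *+ 2.
Proof. by case: b; rewrite /sgn /=; ring. Qed.

Lemma agree_offP m (S : pred 'I_m) (i j : basis m) :
  reflect (forall q, q \notin S -> i q = j q) (agree_off S i j).
Proof.
apply: (iffP forallP) => H q; first by move=> qS; apply/eqP; move: (H q); rewrite qS.
by apply/implyP => /H ->.
Qed.
Lemma agree_onP m (S : pred 'I_m) (i j : basis m) :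
  reflect (forall q, q \in S -> i q = j q) (agree_on S i j).
Proof.
apply: (iffP forallP) => H q; first by move=> qS; apply/eqP; move: (H q); rewrite qS.
by apply/implyP => /H ->.
Qed.
Lemma agree_off_sym m (S : pred 'I_m) (i j : basis m) : agree_off S i j = agree_off S j i.
Proof. by apply/agree_offP/agree_offP => H q /H. Qed.
Lemma agree_off_trans m (S : pred 'I_m) (i j l : basis m) :
  agree_off S i j -> agree_off S j l -> agree_off S i l.
Proof. by move=> /agree_offP H1 /agree_offP H2; apply/agree_offP => q qS; rewrite H1 // H2. Qed.
Lemma agree_off_refl m (S : pred 'I_m) (i : basis m) : agree_off S i i.
Proof. by apply/agree_offP. Qed.
Lemma agree_off_sub m (S S' : pred 'I_m) (i j : basis m) : {subset S <= S'} ->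
  agree_off S i j -> agree_off S' i j.
Proof.
move=> sub /agree_offP H; apply/agree_offP => q qS; apply: H.
by apply: contra qS; apply: sub.
Qed.

Lemma agree_off_congr m (S R : pred 'I_m) (i j i' j' : basis m) : {subset R <= S} ->
  agree_off S i j -> agree_off S i' j' -> agree_on S i i' -> agree_on S j j' ->
  agree_off R i j = agree_off R i' j'.
Proof.
move=> sub /agree_offP H1 /agree_offP H2 /agree_onP H3 /agree_onP H4.
apply: eq_forallb => q; case qS: (q \in S).
  by rewrite H3 // H4.
have qR : q \notin R by apply: contraFN qS; apply: sub.
by rewrite qR /= H1 ?qS // H2 ?qS // !eqxx.
Qed.

Lemma local_gen m (S R : pred 'I_m) (p : basis m -> basis m)
  (F : basis m -> basis m -> CC) (U : op m) :
  (forall i j, U i j = (agree_off R (p i) j)%:R * F i j) ->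
  {subset R <= S} ->
  (forall i, agree_off S i (p i)) ->
  (forall i i', agree_on S i i' -> agree_on S (p i) (p i')) ->
  (forall i j i' j', agree_off S i j -> agree_off S i' j' ->
     agree_on S i i' -> agree_on S j j' -> F i j = F i' j') ->
  local_op S U.
Proof.
move=> EU sub Hp Hp' HF; split.
  move=> i j nS; rewrite EU; case A: (agree_off R (p i) j); last by rewrite mul0r.
  case/negP: nS; apply: agree_off_trans (Hp i) _.
  exact: agree_off_sub A.
move=> i j i' j' a1 a2 a3 a4; rewrite !EU (HF i j i' j') //.
suff -> : agree_off R (p i) j = agree_off R (p i') j' by [].
apply: (agree_off_congr sub _ _ (Hp' _ _ a3) a4).
  by apply: agree_off_trans a1; rewrite agree_off_sym.
by apply: agree_off_trans a2; rewrite agree_off_sym.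
Qed.

Lemma local_ext m (S S' : pred 'I_m) (U : op m) : S =1 S' -> local_op S' U -> local_op S U.
Proof.
move=> E [H1 H2].
have Eo : forall i j, agree_off S i j = agree_off S' i j.
  by move=> i j; apply: eq_forallb => q; rewrite !unfold_in E.
have En : forall i j, agree_on S i j = agree_on S' i j.
  by move=> i j; apply: eq_forallb => q; rewrite !unfold_in E.
by split=> [i j|i j i' j']; rewrite ?Eo ?En; [apply: H1 | apply: H2].
Qed.

Lemma sum_ind m (F : basis m -> CC) b : \sum_q (b == q)%:R * F q = F b.
Proof.
rewrite (bigD1 b) //= eqxx mul1r big1 ?addr0 // => q /negbTE.
by rewrite eq_sym => ->; rewrite mul0r.
Qed.
Lemma sum_ind_r m (F : basis m -> CC) b : \sum_q F q * (q == b)%:R = F b.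
Proof.
rewrite (bigD1 b) //= eqxx mulr1 big1 ?addr0 // => q /negbTE ->; by rewrite mulr0.
Qed.

Lemma unitary_id m : unitary (fun i j : basis m => (i == j)%:R).
Proof.
move=> i j; rewrite (eq_bigr (fun q => (i == q)%:R * (j == q)%:R)).
  by rewrite sum_ind eq_sym.
by move=> q _; rewrite conjC_nat.
Qed.

Lemma local_id m (S : pred 'I_m) : local_op S (fun i j : basis m => (i == j)%:R).
Proof.
split=> [i j|i j i' j' a1 a2 a3 a4].
  move=> nA; case: (i =P j) => // E; case/negP: nA; rewrite E; exact: agree_off_refl.
move/agree_onP: a3 => a3; move/agree_onP: a4 => a4.
move/agree_offP: a1 => a1; move/agree_offP: a2 => a2.
have -> : (i == j) = (i' == j').
  apply/eqP/eqP => E; apply/ffunP => q; case qS: (q \in S).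
  - by rewrite -a3 // -a4 // E.
  - by rewrite a2 ?qS.
  - by rewrite a3 // a4 // E.
  - by rewrite a1 ?qS.
by [].
Qed.

Lemma sum_mkcond_nat m (P : pred (basis m)) (F : basis m -> CC) :
  \sum_q (P q)%:R * F q = \sum_(q | P q) F q.
Proof.
by rewrite [RHS]big_mkcond; apply: eq_bigr => q _; case: (P q); rewrite /= ?mul1r ?mul0r.
Qed.

Section Proto.
Variables (n h : nat).
Hypothesis h_gt0 : (0 < h)%N.

Definition kk := h.*2.
Local Notation Q := 'I_(kk + n + n).+1.
Local Notation B := (basis (kk + n + n).+1).
Local Notation G := {ffun 'I_kk -> bool}.

Definition Rg : pred Q := fun q => (q < kk)%N.
Lemma inRg q : (q \in Rg) = (q < kk)%N. Proof. by []. Qed.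

Definition regq (r : 'I_kk) : Q := inord r.
Lemma regq_val r : val (regq r) = r.
Proof. by apply/inordK; have := ltn_ord r; lia. Qed.

Definition reg (j : B) : G := [ffun r => j (regq r)].
Definition merge (g : G) (b : B) : B :=
  [ffun q : Q => if (insub (val q) : option 'I_kk) is Some r then g r else b q].

Lemma merge_reg_in g b r : merge g b (regq r) = g r.
Proof.
rewrite ffunE regq_val; case: insubP => [r' _ E|]; last by rewrite ltn_ord.
by congr (g _); apply: val_inj.
Qed.
Lemma merge_off g b (q : Q) : (kk <= q)%N -> merge g b q = b q.
Proof. by move=> Hq; rewrite ffunE; case: insubP => [r' /= Hq' _|//]; move: Hq'; rewrite ltnNge Hq. Qed.
Lemma reg_merge g b : reg (merge g b) = g.
Proof. by apply/ffunP => r; rewrite ffunE merge_reg_in. Qed.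
Lemma agree_merge g b : agree_off Rg b (merge g b).
Proof. by apply/agree_offP => q; rewrite inRg -leqNgt => Hq; rewrite merge_off. Qed.
Lemma merge_reg j b : agree_off Rg b j -> merge (reg j) b = j.
Proof.
move/agree_offP => H; apply/ffunP => q; rewrite ffunE; case: insubP => [r _ E|nq].
  by rewrite ffunE; congr (j _); apply: val_inj; rewrite regq_val E.
by apply: H; rewrite inRg.
Qed.

Lemma sum_class (F : B -> CC) b :
  \sum_(j | agree_off Rg b j) F j = \sum_(g : G) F (merge g b).
Proof.
rewrite (reindex (fun g => merge g b)) /=; last first.
  by exists reg => [g _|j]; [exact: reg_merge | rewrite inE => /merge_reg].
by apply: eq_bigl => g; exact: agree_merge.
Qed.

Lemma cardG : #|{: G}| = (2 ^ kk)%N.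
Proof. by rewrite card_ffun card_bool card_ord. Qed.

Definition chiF (a g : G) : CC := \prod_(r < kk) sgn (a r && g r).
Definition chi (i j : B) : CC := chiF (reg i) (reg j).
Definition cst : CC := ((2 : CC) ^+ h)^-1.
Definition Hm (i j : B) : CC := (agree_off Rg i j)%:R * cst * chi i j.

Lemma cst2 : cst * cst * (2 ^ kk)%:R = 1.
Proof.
rewrite /cst -invfM -exprD addnn natrX mulVf //.
by rewrite expf_neq0 // pnatr_eq0.
Qed.
Lemma cst_neq0 : cst != 0.
Proof. by rewrite /cst invr_neq0 // expf_neq0 // pnatr_eq0. Qed.

Lemma chiF_conj a g : (chiF a g)^* = chiF a g.
Proof. by rewrite /chiF rmorph_prod; apply: eq_bigr => r _; case: (_ && _); rewrite /sgn ?rmorphN1 ?rmorph1. Qed.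
Lemma cst_conj : cst^* = cst.
Proof. by rewrite /cst fmorphV rmorphXn rmorph_nat. Qed.
Lemma Hm_conj i j : (Hm i j)^* = Hm i j.
Proof. by rewrite /Hm !rmorphM rmorph_nat; congr (_ * _ * _); [exact: cst_conj | exact: chiF_conj]. Qed.

Definition zeroG : G := [ffun _ => false].
Lemma chiF0 a : chiF a zeroG = 1.
Proof. by apply: big1 => r _; rewrite ffunE andbF. Qed.
Lemma chiF0l a : chiF zeroG a = 1.
Proof. by apply: big1 => r _; rewrite ffunE. Qed.

Definition flip (r0 : 'I_kk) (g : G) : G := [ffun r => if r == r0 then ~~ g r else g r].
Lemma flipE r0 g r : flip r0 g r = if r == r0 then ~~ g r else g r.
Proof. by rewrite ffunE. Qed.
Lemma flipK r0 : involutive (flip r0).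
Proof. by move=> g; apply/ffunP => r; rewrite !ffunE; case: eqP => // _; rewrite negbK. Qed.

Lemma sum_antisym r0 (F : G -> CC) : (forall g, F (flip r0 g) = - F g) ->
  \sum_g F g = 0.
Proof.
move=> H.
have E : \sum_g F g = - \sum_g F g.
  rewrite {1}(reindex_inj (inv_inj (flipK r0))) /= -sumrN.
  by apply: eq_bigr => g _; exact: H.
have : (\sum_g F g) *+ 2 == 0 by rewrite mulr2n {1}E addNr.
by rewrite mulrn_eq0 /= => /eqP.
Qed.

Lemma chiF_prod a b g :
  chiF a g * chiF b g = \prod_(r < kk) sgn ((a r (+) b r) && g r).
Proof.
rewrite /chiF -big_split /=; apply: eq_bigr => r _; rewrite sgnM.
by case: (g r); rewrite ?andbT ?andbF.
Qed.

Lemma Hm_unit : unitary Hm.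
Proof.
move=> i j; under eq_bigr => q _ do rewrite Hm_conj.
case A: (agree_off Rg i j); last first.
  rewrite big1; last first.
    move=> q _; rewrite /Hm.
    case Aiq: (agree_off Rg i q); case Ajq: (agree_off Rg j q);
      rewrite /= ?mul0r ?mulr0 //.
    by move: A; rewrite (agree_off_trans Aiq) // agree_off_sym.
  suff -> : (i == j) = false by [].
  by apply/eqP => E; rewrite E agree_off_refl in A.
rewrite (eq_bigr (fun q => (agree_off Rg i q)%:R * (cst * cst * (chi i q * chi j q))));
  last first.
  move=> q _; rewrite /Hm.
  have -> : agree_off Rg j q = agree_off Rg i q.
    apply/idP/idP => H.
      by apply: agree_off_trans H.
    by apply: agree_off_trans H; rewrite agree_off_sym.
  by case: (agree_off Rg i q); rewrite /= ?mulr1n ?mulr0n ?mul0r ?mul1r //; ring.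
rewrite sum_mkcond_nat sum_class -mulr_sumr.
rewrite (eq_bigr (fun g => chiF (reg i) g * chiF (reg j) g)); last first.
  by move=> g _; rewrite /chi !reg_merge.
case: (i =P j) => [<-|ne].
  rewrite (eq_bigr (fun _ => 1)); last first.
    move=> g _; rewrite chiF_prod; apply: big1 => r _.
    by rewrite addbb.
  by rewrite sumr_const cardG cst2.
have [r0 Hr0] : exists r0, reg i r0 != reg j r0.
  apply/existsP; apply: contra_notT ne; rewrite negb_exists => /forallP H.
  apply/ffunP => q; case: (ltnP q kk) => Hq.
    have := H (Ordinal Hq); rewrite !ffunE negbK => /eqP.
    by have -> : regq (Ordinal Hq) = q by apply: val_inj; rewrite regq_val.
  by move/agree_offP: A; apply; rewrite inRg -leqNgt.
rewrite (@sum_antisym r0) ?mulr0 // => g.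
rewrite !chiF_prod (bigD1 r0) //= [in RHS](bigD1 r0) //=.
rewrite -mulNr; congr (_ * _).
  move: Hr0; rewrite /flip !ffunE eqxx.
  by case: (i (regq r0)); case: (j (regq r0)); case: (g r0); rewrite /sgn /= ?opprK.
by apply: eq_bigr => r nr; rewrite flipE (negbTE nr).
Qed.

Lemma conjM (x y : CC) : (x * y)^* = x^* * y^*.
Proof. exact: rmorphM. Qed.

Lemma kk_gt0 : (0 < kk)%N.
Proof. by rewrite /kk double_gt0. Qed.

Definition xq (i : 'I_n) : Q := inord (kk + i).
Definition yq (i : 'I_n) : Q := inord (kk + n + i).
Lemma xq_val i : val (xq i) = (kk + i)%N.
Proof. by apply/inordK; have := ltn_ord i; lia. Qed.
Lemma yq_val i : val (yq i) = (kk + n + i)%N.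
Proof. by apply/inordK; have := ltn_ord i; lia. Qed.

Lemma xq_nat i : (xq i : nat) = (kk + i)%N. Proof. exact: xq_val. Qed.
Lemma yq_nat i : (yq i : nat) = (kk + n + i)%N. Proof. exact: yq_val. Qed.

Definition own0f (q : Q) : bool := (q < kk + n)%N.
Definition speakerf (t : nat) : bool := (t < kk)%N.
Definition sentf (t : nat) : Q := if (t < kk)%N then inord t else ord_max.

Definition vv (j : B) : nat := enum_rank (reg j).
Definition dA (j : B) : CC :=
  if (vv j < n)%N then sgn (j (inord (kk + vv j))) else sgn (odd (vv j)).
Definition dB (j : B) : CC :=
  if (vv j < n)%N then sgn (j (inord (kk + n + vv j))) else 1.
Definition piB (j : B) : B :=
  [ffun q => if q == ord_max then j q (+) (reg j == zeroG) else j q].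

Definition U0 (i j : B) : CC := dA i * Hm i j.
Definition Uk (i j : B) : CC := Hm (piB i) j * dB j.
Definition Uf (t : nat) : op (kk + n + n).+1 :=
  if t == 0%N then U0 else if t == kk then Uk else (fun i j => (i == j)%:R).

Definition Prot : qprotocol n :=
  @QProtocol n (kk + n + n).+1 kk.+1 own0f xq yq speakerf sentf Uf ord_max.

Lemma dA_conj j : (dA j)^* = dA j.
Proof. by rewrite /dA; case: ifP => _; [case: (j _) | case: (odd _)];
  rewrite /sgn ?rmorphN1 ?rmorph1. Qed.
Lemma dB_conj j : (dB j)^* = dB j.
Proof. by rewrite /dB; case: ifP => _; [case: (j _); rewrite /sgn ?rmorphN1 ?rmorph1 | rewrite rmorph1]. Qed.
Lemma dA_sq j : dA j * dA j = 1.
Proof. by rewrite /dA; case: ifP => _; rewrite sgnK. Qed.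
Lemma dB_sq j : dB j * dB j = 1.
Proof. by rewrite /dB; case: ifP => _; rewrite ?sgnK ?mulr1. Qed.

Lemma regq_neq_max r : (regq r == ord_max) = false.
Proof. by apply/negbTE; apply/eqP => /(congr1 val); rewrite regq_val /=; have := ltn_ord r; lia. Qed.

Lemma reg_piB j : reg (piB j) = reg j.
Proof. by apply/ffunP => r; rewrite !ffunE regq_neq_max. Qed.

Lemma piBK : involutive piB.
Proof.
move=> j; apply/ffunP => q; rewrite ffunE reg_piB ffunE.
by case: eqP => // _; rewrite -addbA addbb addbF.
Qed.

Lemma U0_unit : unitary U0.
Proof.
move=> i j; rewrite (eq_bigr (fun q => dA i * dA j * (Hm i q * (Hm j q)^*))); last first.
  by move=> q _; rewrite /U0 conjM dA_conj; ring.
rewrite -mulr_sumr Hm_unit; case: (i =P j) => [->|_].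
  by rewrite dA_sq mul1r.
by rewrite /= mulr0.
Qed.

Lemma Uk_unit : unitary Uk.
Proof.
move=> i j; rewrite (eq_bigr (fun q => Hm (piB i) q * (Hm (piB j) q)^*)); last first.
  move=> q _; rewrite /Uk conjM dB_conj.
  by rewrite mulrACA dB_sq mulr1.
by rewrite Hm_unit (inj_eq (inv_inj piBK)).
Qed.

Lemma reg_agree (S : pred Q) i i' : {subset Rg <= S} -> agree_on S i i' -> reg i = reg i'.
Proof.
move=> sub /agree_onP H; apply/ffunP => r; rewrite !ffunE; apply: H; apply: sub.
by rewrite inRg regq_val.
Qed.

Lemma U0_local : local_op [pred q : Q | (q < kk + n)%N] U0.
Proof.
have sub : {subset Rg <= [pred q : Q | (q < kk + n)%N]}.
  by move=> q; rewrite inRg inE; lia.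
apply: (@local_gen _ _ Rg id (fun i j => dA i * cst * chi i j)) => //.
- by move=> i j; rewrite /U0 /Hm; ring.
- by move=> i; apply: agree_off_refl.
move=> i j i' j' _ _ a3 a4; rewrite /chi (reg_agree sub a3) (reg_agree sub a4).
congr (_ * _ * _); rewrite /dA /vv (reg_agree sub a3); case: ifP => // Hv.
move/agree_onP: a3 => ->; rewrite // inE inordK; lia.
Qed.

Lemma Uk_local : local_op [pred q : Q | (q < kk)%N || (kk + n <= q)%N] Uk.
Proof.
set S := [pred q : Q | _].
have sub : {subset Rg <= S} by move=> q; rewrite inRg inE => ->.
have maxS : (ord_max : Q) \in S by rewrite inE /=; apply/orP; right; lia.
apply: (@local_gen _ _ Rg piB (fun i j => cst * chi (piB i) j * dB j)) => //.
- by move=> i j; rewrite /Uk /Hm; ring.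
- move=> i; apply/agree_offP => q qS; rewrite ffunE; case: eqP => // E.
  by move: qS; rewrite E maxS.
- move=> i i' a; apply/agree_onP => q qS; rewrite !ffunE (reg_agree sub a).
  by move/agree_onP: a => ->.
move=> i j i' j' _ _ a3 a4; rewrite /chi !reg_piB (reg_agree sub a3) (reg_agree sub a4).
congr (_ * _); rewrite /dB /vv (reg_agree sub a4); case: ifP => // Hv.
move/agree_onP: a4 => ->; rewrite // inE inordK; first (apply/orP; right); lia.
Qed.

Lemma ownerE t : (t <= kk)%N -> forall q, @owner n Prot t q = own0f q (+) (q < t)%N.
Proof.
elim: t => [|t IH] Ht q /=; first by rewrite addbF.
rewrite /sentf (_ : (t < kk)%N = true) //; rewrite IH ?(ltnW Ht) //.
have -> : (q == inord t) = (val q == t).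
  apply/eqP/eqP => [->|E]; first (rewrite /= inordK //; lia).
  apply: val_inj => /=; rewrite inordK; [exact: E | lia].
case: (val q =P t) => [E|NE].
  have E' : (q : nat) = t := E.
  by rewrite E' ltnn ltnSn addbF addbT.
have NE' : ((q : nat) == t) = false by apply/eqP.
by rewrite ltnS [(q <= t)%N]leq_eqVlt NE'.
Qed.

Lemma Prot_valid : valid_protocol Prot.
Proof.
split => /=.
- by move=> i j /(congr1 val); rewrite !xq_val => /eqP; rewrite eqn_add2l => /eqP /val_inj.
- by move=> i j /(congr1 val); rewrite !yq_val => /eqP; rewrite eqn_add2l => /eqP /val_inj.
- by move=> i; rewrite /own0f xq_nat ltn_add2l ltn_ord.
- by move=> i; rewrite /own0f yq_nat; lia.
move=> t; rewrite ltnS leq_eqVlt => /orP [/eqP ->|Ht].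
  have kk0 : (kk == 0%N) = false by apply/negbTE; rewrite -lt0n kk_gt0.
  rewrite /Uf kk0 eqxx; split.
  - rewrite ownerE // /sentf ltnn /own0f /speakerf ltnn /=.
    have -> : (kk + n + n < kk + n)%N = false by lia.
    by have -> : (kk + n + n < kk)%N = false by lia.
  - exact: Uk_unit.
  apply: local_ext Uk_local => q /=; rewrite ownerE // /own0f /speakerf ltnn.
  by case: (ltnP q kk) => H1; case: (ltnP q (kk + n)) => H2 //=; lia.
split.
- rewrite ownerE ?(ltnW Ht) // /sentf Ht /own0f /speakerf Ht inordK; last lia.
  by rewrite ltnn (_ : (t < kk + n)%N = true) //; lia.
- rewrite /Uf; case: eqP => _; first exact: U0_unit.
  rewrite (_ : (t == kk) = false); last by apply/negbTE; rewrite neq_ltn Ht.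
  exact: unitary_id.
rewrite /Uf; case: eqP => [E|_].
  apply: local_ext U0_local => q /=; rewrite E /= /own0f /speakerf kk_gt0.
  by case: (_ < _)%N.
rewrite (_ : (t == kk) = false); last by apply/negbTE; rewrite neq_ltn Ht.
exact: local_id.
Qed.

Hypothesis n_le : (n <= 2 ^ h.*2)%N.
Hypothesis n_even : ~~ odd n.

Section Run.
Variables (x y : 'I_n -> bool).
Definition b0 : B := init_basis Prot x y.

Lemma b0E q : b0 q = [exists i, (xq i == q) && x i] || [exists j, (yq j == q) && y j].
Proof. by rewrite ffunE. Qed.

Lemma b0_reg : reg b0 = zeroG.
Proof.
apply/ffunP => r; rewrite [reg b0 r]ffunE [zeroG r]ffunE b0E.
apply/negbTE; rewrite negb_or !negb_exists; apply/andP; split; apply/forallP => i;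
  rewrite negb_and; apply/orP; left; apply/eqP => /(congr1 val);
  rewrite ?xq_val ?yq_val regq_val; have := ltn_ord r; lia.
Qed.

Lemma b0_max : b0 ord_max = false.
Proof.
rewrite b0E; apply/negbTE; rewrite negb_or !negb_exists; apply/andP; split; apply/forallP => i;
  rewrite negb_and; apply/orP; left; apply/eqP => /(congr1 val);
  rewrite ?xq_val ?yq_val /=; have := ltn_ord i; lia.
Qed.

Lemma b0_x (i : 'I_n) : b0 (inord (kk + i)) = x i.
Proof.
rewrite b0E.
have -> : [exists j, (yq j == inord (kk + i)) && y j] = false.
  apply/negbTE; rewrite negb_exists; apply/forallP => j; rewrite negb_and; apply/orP; left.
  apply/eqP => /(congr1 val); rewrite yq_val /= inordK; have := ltn_ord i; have := ltn_ord j; lia.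
rewrite orbF; apply/existsP/idP => [[j /andP [/eqP E xj]]|xi].
  suff -> : i = j by [].
  apply: val_inj; move/(congr1 val): E; rewrite xq_val /= inordK; have := ltn_ord i; lia.
by exists i; rewrite xi andbT.
Qed.

Lemma b0_y (i : 'I_n) : b0 (inord (kk + n + i)) = y i.
Proof.
rewrite b0E.
have -> : [exists j, (xq j == inord (kk + n + i)) && x j] = false.
  apply/negbTE; rewrite negb_exists; apply/forallP => j; rewrite negb_and; apply/orP; left.
  apply/eqP => /(congr1 val); rewrite xq_val /= inordK; have := ltn_ord i; have := ltn_ord j; lia.
apply/existsP/idP => [[j /andP [/eqP E yj]]|yi].
  suff -> : i = j by [].
  apply: val_inj; move/(congr1 val): E; rewrite yq_val /= inordK; have := ltn_ord i; lia.
by exists i; rewrite yi andbT.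
Qed.

Lemma run_mid t : (t < kk)%N -> forall b, @run n Prot x y t.+1 b = U0 b b0.
Proof.
elim: t => [|t IH] Ht b.
  by rewrite /= /apply_op /Uf eqxx sum_ind_r.
rewrite /= /apply_op /Uf /=.
rewrite (_ : (t.+1 == kk) = false); last by apply/negbTE; rewrite neq_ltn Ht.
rewrite (eq_bigr (fun j => (b == j)%:R * U0 j b0)); first by rewrite sum_ind.
by move=> j _; rewrite -IH // ltnW.
Qed.

Lemma run_fin b : @run n Prot x y kk.+1 b = \sum_j Uk b j * U0 j b0.
Proof.
rewrite /= /apply_op /Uf.
have kk0 : (kk == 0%N) = false by apply/negbTE; rewrite -lt0n kk_gt0.
rewrite kk0 eqxx; apply: eq_bigr => j _; congr (_ * _).
have := kk_gt0; case E: kk => [|k'] // _.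
by rewrite run_mid // E.
Qed.

Definition Sig : CC := \sum_(j | agree_off Rg b0 j) dA j * dB j.

Lemma psi_term (b j : B) : b ord_max = true ->
  Uk b j * U0 j b0 =
  (agree_off Rg (piB b) b0)%:R * (cst * cst) * ((agree_off Rg b0 j)%:R * (dA j * dB j)).
Proof.
move=> bm.
have chib : chi j b0 = 1 by rewrite /chi b0_reg chiF0.
rewrite /Uk /U0 /Hm chib.
case A1: (agree_off Rg (piB b) j); case A2: (agree_off Rg j b0).
- have C0 : agree_off Rg (piB b) b0 by apply: agree_off_trans A1 A2.
  have A3 : agree_off Rg b0 j by rewrite agree_off_sym.
  have rb : reg b = zeroG.
    move/agree_offP: C0 => /(_ ord_max); rewrite inRg b0_max ffunE eqxx bm /=.
    have -> : (kk + n + n < kk)%N = false by lia.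
    by move=> /(_ isT) /negbFE /eqP.
  rewrite C0 A3 /chi reg_piB rb chiF0l /=.
  by rewrite ?mulr1n; ring.
all: case C0 : (agree_off Rg (piB b) b0); case A3 : (agree_off Rg b0 j);
  rewrite /= ?mulr0n ?mul0r ?mulr0 ?mul0r //.
- by move: A2; rewrite agree_off_sym A3.
- by move: A1; rewrite (agree_off_trans C0 A3).
- by move: A1; rewrite (agree_off_trans C0 A3).
Qed.

Lemma psiE (b : B) : b ord_max = true ->
  @run n Prot x y kk.+1 b = (agree_off Rg (piB b) b0)%:R * (cst * cst) * Sig.
Proof.
move=> bm; rewrite run_fin (eq_bigr _ (fun j _ => psi_term j bm)) -mulr_sumr.
by rewrite sum_mkcond_nat.
Qed.



Definition Fn (v : nat) : CC :=
  if (v < n)%N then sgn (b0 (inord (kk + v))) * sgn (b0 (inord (kk + n + v)))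
  else sgn (odd v).

Lemma Sig_Fn : Sig = \sum_(0 <= v < 2 ^ kk) Fn v.
Proof.
rewrite /Sig sum_class.
rewrite (eq_bigr (fun g => Fn (enum_rank g))); last first.
  move=> g _; rewrite /dA /dB /vv reg_merge /Fn; case: ifP => Hv; last by rewrite mulr1.
  by rewrite !merge_off // inordK //; lia.
rewrite (reindex (fun i : 'I_#|G| => enum_val i)) /=; last first.
  by apply: onW_bij; exists enum_rank => [i|g]; [exact: enum_valK | exact: enum_rankK].
under eq_bigr => i _ do rewrite enum_valK.
by rewrite -(big_mkord xpredT Fn) cardG.
Qed.

Lemma altsum a m : ~~ odd a -> \sum_(a <= v < a + m.*2) sgn (odd v) = 0.
Proof.
move=> Ha; elim: m => [|m IH]; first by rewrite addn0 big_geq.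
rewrite doubleS !addnS big_nat_recr ?big_nat_recr //=; last by rewrite leqW // leq_addr.
  rewrite IH oddD odd_double (negbTE Ha) /= /sgn add0r; ring.
by rewrite leq_addr.
Qed.

Lemma Sig_val : Sig = n%:R - (hamdist x y)%:R *+ 2.
Proof.
have nle : (n <= 2 ^ kk)%N := n_le.
rewrite Sig_Fn (@big_cat_nat _ _ _ n) //=.
have -> : \sum_(n <= v < 2 ^ kk) Fn v = 0.
  rewrite (eq_big_nat _ _ (F2 := fun v => sgn (odd v))); last first.
    by move=> v /andP [Hv _]; rewrite /Fn ltnNge Hv.
  have o : odd (2 ^ kk - n) = false.
    rewrite oddB; last exact: n_le.
    by rewrite oddX (negbTE n_even) /kk double_eq0 (negbTE (lt0n_neq0 h_gt0)).
  have E : (2 ^ kk = n + ((2 ^ kk - n)./2).*2)%N.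
    by rewrite -[in LHS](subnKC n_le) -[in LHS](odd_double_half (2 ^ kk - n)) o.
  by rewrite E altsum.
rewrite addr0 big_mkord.
rewrite (eq_bigr (fun i : 'I_n => 1 - ((x i (+) y i : bool) : nat)%:R *+ 2)); last first.
  by move=> i _; rewrite /Fn ltn_ord b0_x b0_y sgnM sgn_nat.
by rewrite sumrB sumr_const card_ord sumrMnl -natr_sum.
Qed.

Lemma Sig_eq0 : (Sig == 0) = (hamdist x y == n./2).
Proof.
have hn : n = (n./2).*2 by rewrite -{1}(odd_double_half n) (negbTE n_even) add0n.
rewrite Sig_val subr_eq0 -mulrnA eqr_nat muln2.
apply/eqP/eqP => E.
  by have := congr1 half E; rewrite doubleK => ->.
by rewrite E -hn.
Qed.

Lemma piBE (j : B) q : piB j q = if q == ord_max then j q (+) (reg j == zeroG) else j q.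
Proof. by rewrite ffunE. Qed.

Lemma accept_val : @accept_prob n Prot x y =
  \sum_(b : B | b ord_max) `|(agree_off Rg (piB b) b0)%:R * (cst * cst) * Sig| ^+ 2.
Proof. by apply: eq_bigr => b bm; rewrite psiE. Qed.

Lemma Prot_correct :
  (@HAM n n./2 x y = false -> @accept_prob n Prot x y = 0) /\
  (@HAM n n./2 x y = true -> 0 < @accept_prob n Prot x y).
Proof.
split => H.
  have S0 : Sig = 0 by apply/eqP; rewrite Sig_eq0; move: H; rewrite /HAM => /negbFE.
  by rewrite accept_val big1 // => b _; rewrite S0 mulr0 normr0 expr2 mul0r.
have S0 : Sig != 0 by rewrite Sig_eq0.
pose bs : B := [ffun q => if q == ord_max then true else b0 q].
have bsE q : bs q = if q == ord_max then true else b0 q by rewrite ffunE.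
have bsm : bs ord_max by rewrite bsE eqxx.
have rbs : reg bs = zeroG.
  by rewrite -b0_reg; apply/ffunP => r; rewrite [reg bs r]ffunE [reg b0 r]ffunE bsE regq_neq_max.
have pb : agree_off Rg (piB bs) b0.
  apply/agree_offP => q _; rewrite piBE bsE rbs eqxx.
  by case: eqP => [->|//]; rewrite b0_max.
rewrite accept_val (bigD1 bs) //=; apply: ltr_pwDl.
  rewrite pb /= mulr1n mul1r exprn_gt0 // normr_gt0.
  by rewrite mulf_neq0 // mulf_neq0 // cst_neq0.
by apply: sumr_ge0 => b _; rewrite exprn_ge0 // normr_ge0.
Qed.
End Run.

Lemma Prot_nondet : nondet_computes Prot (@HAM n n./2).
Proof. by split; [exact: Prot_valid | move=> x y; exact: Prot_correct]. Qed.

End Proto.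

Theorem theorem5p4 :
  exists (C N0 : nat), forall n : nat, (N0 <= n)%N -> ~~ odd n ->
    NQC_le (@HAM n n./2) (C * trunc_log 2 n)%N.
Proof.
exists 4%N, 2%N => n Hn Hev.
set t := trunc_log 2 n.
have t1 : (0 < t)%N by rewrite /t trunc_log_gt0 Hn.
have nlt : (n < 2 ^ t.+1)%N by apply: trunc_log_ltn.
have ht := odd_double_half t.
have ht1 : (t <= (t./2).*2 + 1)%N by rewrite -{1}ht; case: (odd t); rewrite /= ?add0n ?addn1.
have ht2 : ((t./2).*2 <= t)%N by rewrite -{2}ht leq_addl.
exists (Prot n (t./2).+1); split.
  apply: Prot_nondet => //.
  apply: leq_trans (ltnW nlt) _; rewrite leq_pexp2l // doubleS; lia.
rewrite /cost /= /kk doubleS; lia.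
Qed.
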